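(* Let $a\ge 1$ and let $v_1,\dots,v_n$ be $a$-submodular valuations on a finite set of items $X=\{1,\dots,m\}$. Consider the greedy algorithm: start with $S_1=\dots=S_n=\emptyset$; for $x=1,\dots,m$ in turn, let $j$ be a bidder maximizing $v_j(S_j\cup\{x\})-v_j(S_j)$ and set $S_j\leftarrow S_j\cup\{x\}$. Then the resulting allocation satisfies $\sum_i v_i(S_i)\ge\frac{1}{1+a}\max\sum_i v_i(T_i)$, the maximum over all partitions $(T_1,\dots,T_n)$ of $X$; i.e., the greedy algorithm is a $(1+a)$-approximation.
   Context: A valuation on a finite set $X$ is a function $v:2^X\to\mathbb{R}_{\ge 0}$ with $v(\emptyset)=0$ and monotone under inclusion. For $W\subseteq X$, the marginal valuation is $v(A\mid W)=v(A\cup W)-v(W)$ for $A\subseteq X\setminus W$. A valuation $w$ exhibits $a$-bounded complementarities if $w(A\cup\{x\})\le w(A)+a\,w(\{x\})$ for every set $A$ and item $x$. A valuation $v$ is $a$-submodular if for every $W\subseteq X$ the marginal valuation $v(\cdot\mid W)$ exhibits $a$-bounded complementarities. *)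

(* Defs.v *)
(* Items X = 'I_m (item x+1 of the paper is ordinal x), bidders 'I_n. *)
From mathcomp Require Import all_boot all_order all_algebra.
Set Implicit Arguments. Unset Strict Implicit. Unset Printing Implicit Defensive.
Import Order.TTheory GRing.Theory Num.Theory.
Local Open Scope ring_scope.

Section Defs.
Variables (R : realFieldType) (T : finType).

Definition valuation (v : {set T} -> R) : Prop :=
  [/\ v set0 = 0, (forall A : {set T}, 0 <= v A) & (forall A B : {set T}, A \subset B -> v A <= v B)].

Definition marginal (v : {set T} -> R) (W : {set T}) (A : {set T}) : R :=
  v (A :|: W) - v W.

Definition bounded_compl_on (a : R) (D : {set T}) (w : {set T} -> R) : Prop :=
  forall (A : {set T}) (x : T), A \subset D -> x \in D ->
    w (x |: A) <= w A + a * w [set x].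

Definition a_submodular (a : R) (v : {set T} -> R) : Prop :=
  forall W : {set T}, bounded_compl_on a (~: W) (marginal v W).
End Defs.

(* S k i = bundle of bidder i after the first k items were processed.
   Any tie-breaking among maximizing bidders is allowed. *)
Definition greedy_run (R : realFieldType) (n m : nat)
  (v : 'I_n -> {set 'I_m} -> R) (S : nat -> 'I_n -> {set 'I_m}) : Prop :=
  (forall i, S 0%N i = set0) /\
  (forall (k : nat) (hk : (k < m)%N), exists j : 'I_n,
     (forall j' : 'I_n,
        v j' (Ordinal hk |: S k j') - v j' (S k j')
          <= v j (Ordinal hk |: S k j) - v j (S k j)) /\
     (forall i : 'I_n, S k.+1 i = if i == j then Ordinal hk |: S k i else S k i)).

Definition is_partition (n m : nat) (Tp : 'I_n -> {set 'I_m}) : Prop :=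
  (forall i j : 'I_n, i != j -> [disjoint Tp i & Tp j]) /\
  (\bigcup_(i : 'I_n) Tp i = [set: 'I_m]).

(* Main.v *)
Require Import Defs.
From mathcomp Require Import all_boot all_order all_algebra.
From mathcomp Require Import lra.
Import Order.TTheory GRing.Theory Num.Theory.
Local Open Scope ring_scope.

Theorem theorem13 (R : realFieldType) (a : R) (n m : nat)
  (v : 'I_n -> {set 'I_m} -> R)
  (ha : 1 <= a)
  (hval : forall i, valuation (v i))
  (hsub : forall i, a_submodular a (v i))
  (S : nat -> 'I_n -> {set 'I_m})
  (hS : greedy_run v S) :
  forall Tp : 'I_n -> {set 'I_m}, is_partition Tp ->
    (1 + a)^-1 * (\sum_(i < n) v i (Tp i)) <= \sum_(i < n) v i (S m i).
Proof.
move=> Tp [Tdis Tcov].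
case: hS => hS0 hSs.
have a0 : 0 <= a by lra.
have mono : forall i (A B : {set 'I_m}), A \subset B -> v i A <= v i B.
  by move=> i A B; case: (hval i) => _ _; apply.
have v0 : forall i, v i set0 = 0 by move=> i; case: (hval i).
pose F k := \sum_(i < n) v i (S k i).
have Sinc : forall k i, (k < m)%N -> S k i \subset S k.+1 i.
  move=> k i hk; have [j [_ ->]] := hSs k hk.
  by case: (i == j) => //; apply: subsetUr.
have Smono : forall d k i, (k + d <= m)%N -> S k i \subset S (k + d)%N i.
  elim=> [|d IH] k i hkd; first by rewrite addn0.
  apply: subset_trans (IH k i _) _; first by apply: leq_trans hkd; rewrite leq_add2l.
  by rewrite addnS; apply: Sinc; rewrite -addnS.
have SkSm : forall k i, (k <= m)%N -> S k i \subset S m i.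
  by move=> k i hk; have := Smono (m - k)%N k i; rewrite subnKC //; apply.
have step : forall k (hk : (k < m)%N) i,
   v i (Ordinal hk |: S k i) - v i (S k i) <= F k.+1 - F k.
  move=> k hk i; have [j [hmax hupd]] := hSs k hk.
  rewrite /F -sumrB (bigD1 j) //= big1 ?addr0.
    by rewrite hupd eqxx.
  by move=> i' /negbTE hi'; rewrite hupd hi' subrr.
have stepge0 : forall k, (k < m)%N -> 0 <= F k.+1 - F k.
  move=> k hk; rewrite /F -sumrB; apply: sumr_ge0 => i _.
  by rewrite subr_ge0; apply: mono; apply: Sinc.
pose g (x : 'I_m) := F (val x).+1 - F (val x).
have g0 : forall x, 0 <= g x by move=> x; apply: stepge0; apply: ltn_ord.
have key : forall i (U : {set 'I_m}) x, S m i \subset U ->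
    v i (x |: U) - v i U <= a * g x.
  move=> i U x hU.
  case: (boolP (x \in U)) => hx.
    by rewrite (setUidPr _) ?sub1set // subrr mulr_ge0.
  pose W := S (val x) i.
  have hWm : W \subset S m i by apply: SkSm; exact: ltnW (ltn_ord x).
  have hWU : W \subset U by apply: subset_trans hU.
  have hxW : x \in ~: W.
    by rewrite in_setC; apply: contra hx; apply: (subsetP hWU).
  have H : bounded_compl_on a (~: W) (marginal (v i) W) by apply: hsub.
  rewrite /bounded_compl_on /marginal in H.
  have := H (U :\: W) x _ hxW; rewrite setDE subsetIr => /(_ isT).
  have e1 : U :&: ~: W :|: W = U.
    apply/setP=> y; rewrite !inE; case: (boolP (y \in W)) => hy /=.
      by rewrite orbT (subsetP hWU).
    by rewrite andbT orbF.
  have e2 : x |: (U :&: ~: W) :|: W = x |: U.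
    by rewrite -setUA e1.
  rewrite e1 e2.
  have := step _ (ltn_ord x) i.
  have -> : Ordinal (ltn_ord x) = x by apply: val_inj.
  rewrite -/W -/(g x) => hg hH.
  have : a * (v i (x |: W) - v i W) <= a * g x by apply: ler_wpM2l.
  lra.
have keyseq : forall i (s : seq 'I_m),
    v i (S m i :|: [set x in s]) - v i (S m i) <= a * \sum_(x <- s) g x.
  move=> i; elim=> [|x s IH].
    have -> : [set x in [::]] = set0 :> {set 'I_m} by apply/setP=> y; rewrite !inE.
    by rewrite setU0 subrr big_nil mulr0.
  rewrite set_cons setUCA big_cons mulrDr.
  have := key i (S m i :|: [set x in s]) x (subsetUl _ _).
  lra.
have hT : forall i, v i (Tp i) <= v i (S m i) + a * \sum_(x in Tp i) g x.
  move=> i; have := keyseq i (enum (Tp i)); rewrite big_enum set_enum.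
  have := mono i (Tp i) (S m i :|: Tp i) (subsetUr _ _).
  lra.
have hsum : \sum_(i < n) v i (Tp i) <= F m + a * \sum_(x : 'I_m) g x.
  apply: le_trans (ler_sum _ (fun i _ => hT i)) _.
  rewrite big_split /= -mulr_sumr.
  rewrite -(partition_disjoint_bigcup _ _ Tdis) Tcov.
  apply: lerD => //; apply: ler_wpM2l => //.
  rewrite le_eqVlt; apply/orP; left; apply/eqP.
  by apply: eq_bigl => x; exact: in_setT.
have hg : \sum_(x : 'I_m) g x = F m.
  rewrite /g -(big_mkord xpredT (fun k => F k.+1 - F k)) telescope_sumr //.
  have -> : F 0%N = 0 by rewrite /F big1 // => i _; rewrite hS0 v0.
  by rewrite subr0.
rewrite hg in hsum.
have h1a : 0 < 1 + a by lra.
rewrite ler_pdivrMl //.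
by rewrite mulrDl mul1r.
Qed.
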